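(* Let $\mathfrak S$ be a commutative semiring with identity. Each of the following sets of ideals of $\mathfrak S$, endowed with the ideal topology, is quasi-compact: the set of maximal ideals, the set of prime ideals, the set of strongly irreducible ideals, the set of primary ideals, the set of irreducible ideals, and the set of radical ideals.
   Context: A semiring $(\mathfrak S,+,0,\cdot,1)$ has $(\mathfrak S,+,0)$ a commutative monoid, $(\mathfrak S,\cdot,1)$ a monoid, $0r=r0=0$, and two-sided distributivity; all semirings are commutative. An ideal is a nonempty proper subset closed under addition and under multiplication by elements of $\mathfrak S$. Prime: $ab\in\mathfrak p\Rightarrow a\in\mathfrak p$ or $b\in\mathfrak p$. Maximal: not properly contained in another ideal. Primary: $xy\in\mathfrak a\Rightarrow x\in\mathfrak a$ or $y^n\in\mathfrak a$ for some $n$. Strongly irreducible: for ideals $\mathfrak a,\mathfrak b$, $\mathfrak a\cap\mathfrak b\subseteq\mathfrak s$ implies $\mathfrak a\subseteq\mathfrak s$ or $\mathfrak b\subseteq\mathfrak s$. Irreducible: $\mathfrak a\cap\mathfrak b=\mathfrak s$ implies $\mathfrak a=\mathfrak s$ or $\mathfrak b=\mathfrak s$. Radical: $\mathfrak a=\sqrt{\mathfrak a}=\{r\mid r^n\in\mathfrak a\text{ for some }n\ge1\}$. For a set $\sigma_{\mathfrak S}$ of ideals and an ideal $\mathfrak a$, $\mathfrak a^{\uparrow}=\{\mathfrak x\in\sigma_{\mathfrak S}\mid\mathfrak a\subseteq\mathfrak x\}$; the ideal topology on $\sigma_{\mathfrak S}$ has the sets $\mathfrak a^{\uparrow}$ as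 a subbasis of closed sets. *)

(* Defs.v *)
(* Commutative semirings with 1 are [comPzSemiRingType]
   (the trivial semiring 0 = 1 is allowed, as in the paper's definition). *)
From Stdlib Require List.
From mathcomp Require Import all_boot all_algebra.
Set Implicit Arguments. Unset Strict Implicit. Unset Printing Implicit Defensive.
Import GRing.Theory.
Local Open Scope ring_scope.

Section Ideals.
Variable S : comPzSemiRingType.

Definition subset (a b : S -> Prop) := forall x, a x -> b x.
Definition seteq (a b : S -> Prop) := forall x, a x <-> b x.
Definition inter (a b : S -> Prop) : S -> Prop := fun x => a x /\ b x.

Definition is_ideal (a : S -> Prop) : Prop :=
  (exists x, a x) /\ (exists x, ~ a x) /\
  (forall x y, a x -> a y -> a (x + y)) /\
  (forall r x, a x -> a (r * x)).

Definition is_prime (p : S -> Prop) : Prop :=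
  is_ideal p /\ forall x y, p (x * y) -> p x \/ p y.

Definition is_maximal (m : S -> Prop) : Prop :=
  is_ideal m /\ forall b, is_ideal b -> subset m b -> seteq b m.

Definition is_primary (a : S -> Prop) : Prop :=
  is_ideal a /\ forall x y, a (x * y) -> a x \/ exists n : nat, a (y ^+ n).

Definition is_strongly_irreducible (s : S -> Prop) : Prop :=
  is_ideal s /\ forall a b, is_ideal a -> is_ideal b ->
    subset (inter a b) s -> subset a s \/ subset b s.

Definition is_irreducible (s : S -> Prop) : Prop :=
  is_ideal s /\ forall a b, is_ideal a -> is_ideal b ->
    seteq (inter a b) s -> seteq a s \/ seteq b s.

Definition radical (a : S -> Prop) : S -> Prop :=
  fun r => exists n : nat, (1 <= n)%N /\ a (r ^+ n).

Definition is_radical (a : S -> Prop) : Prop :=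
  is_ideal a /\ seteq a (radical a).

(* The ideal topology on a set [sigma] of ideals: subbasic closed sets are
   a^up = {x in sigma | a ⊆ x} for ideals a.  Hence U ⊆ sigma is open iff
   each point of U lies in a finite intersection of subbasic open sets
   (complements of a^up in sigma) contained in U (empty intersection = sigma). *)
Definition up (sigma : (S -> Prop) -> Prop) (a : S -> Prop) : (S -> Prop) -> Prop :=
  fun x => sigma x /\ subset a x.

Definition ideal_open (sigma : (S -> Prop) -> Prop) (U : (S -> Prop) -> Prop) : Prop :=
  (forall x, U x -> sigma x) /\
  forall x, U x -> exists l : list (S -> Prop),
    (forall a, List.In a l -> is_ideal a) /\
    (forall a, List.In a l -> ~ up sigma a x) /\
    (forall y, sigma y -> (forall a, List.In a l -> ~ up sigma a y) -> U y).

Definition quasi_compact (sigma : (S -> Prop) -> Prop) : Prop :=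
  forall (I : Type) (U : I -> (S -> Prop) -> Prop),
    (forall i, ideal_open sigma (U i)) ->
    (forall x, sigma x -> exists i, U i x) ->
    exists l : list I, forall x, sigma x -> exists i, List.In i l /\ U i x.

End Ideals.

(* Main.v *)
Require Import Defs.
From mathcomp Require Import all_boot all_algebra.
From mathcomp Require Import ring.
From mathcomp Require classical_sets.
From Stdlib Require Import Classical FunctionalExtensionality PropExtensionality.
Set Implicit Arguments. Unset Strict Implicit. Unset Printing Implicit Defensive.
Import GRing.Theory.
Local Open Scope ring_scope.

Section Proof.
Variable S : comPzSemiRingType.

Lemma ideal_0 (a : S -> Prop) : is_ideal a -> a 0.
Proof. move=> [[x ax] [_ [_ Hm]]]. rewrite -(mul0r x). exact: Hm. Qed.

Lemma ideal_1 (a : S -> Prop) : is_ideal a -> ~ a 1.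
Proof.
move=> [_ [[y ny] [_ Hm]]] a1; apply: ny; rewrite -(mulr1 y); exact: Hm.
Qed.

Lemma max_gen (m : S -> Prop) x : is_maximal m -> ~ m x ->
  exists u r, m u /\ 1 = u + r * x.
Proof.
move=> [Hi Hmax] nx; apply: NNPP => H.
pose b := fun z => exists u r, m u /\ z = u + r * x.
have m0 := ideal_0 Hi.
have bi : is_ideal b.
  split; first by exists x, 0, 1; split=> //; rewrite add0r mul1r.
  split; first by exists 1; move=> [u [r [mu e]]]; apply: H; exists u, r.
  case: Hi => _ [_ [Ha Hm]]; split.
    move=> z1 z2 [u1 [r1 [m1 ->]]] [u2 [r2 [m2 ->]]].
    exists (u1 + u2), (r1 + r2); split; first exact: Ha.
    by rewrite mulrDl !addrA; congr (_ + _); rewrite -!addrA (addrC u2).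
  move=> s z [u [r [mu ->]]]; exists (s * u), (s * r); split; first exact: Hm.
  by rewrite mulrDr mulrA.
have mb : Defs.subset m b by move=> z mz; exists z, 0; split=> //; rewrite mul0r addr0.
have [H1 _] := Hmax b bi mb x; apply: nx; apply: H1.
by exists 0, 1; rewrite add0r mul1r.
Qed.

Lemma max_prime (m : S -> Prop) : is_maximal m -> is_prime m.
Proof.
move=> Hm; split; first by case: Hm.
move=> x y mxy; apply: NNPP => H.
have nx : ~ m x by move=> ?; apply: H; left.
have ny : ~ m y by move=> ?; apply: H; right.
have [u1 [r1 [m1 e1]]] := max_gen Hm nx.
have [u2 [r2 [m2 e2]]] := max_gen Hm ny.
case: Hm => Hi _; apply: (ideal_1 Hi).
have -> : (1 : S) = (u1 + r1 * x) * (u2 + r2 * y) by rewrite -e1 -e2 mulr1.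
rewrite mulrDl (mulrDr (r1 * x)) (mulrACA r1 x r2 y).
case: Hi => _ [_ [Ha Hmu]].
apply: (Ha); first by rewrite mulrC; exact: Hmu.
apply: (Ha); by apply: Hmu.
Qed.

Lemma build_e (m : S -> Prop) (L : list (S -> Prop)) : is_prime m ->
  (forall a, List.In a L -> is_ideal a) -> (forall a, List.In a L -> ~ Defs.subset a m) ->
  exists e, ~ m e /\ forall a, List.In a L -> a e.
Proof.
move=> [Hi Hp]; elim: L => [|a L IH] HI HS.
  by exists 1; split=> //; exact: ideal_1.
have [e [ne He]] : exists e, ~ m e /\ forall a, List.In a L -> a e.
  by apply: IH => a' Ha'; [apply: HI | apply: HS]; right.
have [v [av nv]] : exists v, a v /\ ~ m v.
  apply: NNPP => H; apply: (HS a); first by left.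
  by move=> z az; apply: NNPP => nz; apply: H; exists z.
exists (e * v); split; first by move=> /Hp [] //.
move=> a' [<-|Ha'].
  by have [_ [_ [_ Hm]]] := HI a (or_introl erefl); exact: Hm.
have [_ [_ [_ Hm]]] := HI a' (or_intror Ha').
rewrite mulrC; apply: Hm; exact: He.
Qed.

Lemma ideal_sum (x : S -> Prop) (l : seq (S * S)) : is_ideal x ->
  (forall p, List.In p l -> x p.2) -> x (\sum_(p <- l) p.1 * p.2).
Proof.
move=> Hi; elim: l => [|p l IH] H; first by rewrite big_nil; exact: ideal_0.
rewrite big_cons; case: (Hi) => _ [_ [Ha Hm]]; apply: Ha.
  by apply: Hm; apply: H; left.
by apply: IH => q Hq; apply: H; right.
Qed.

Lemma exists_max (J : S -> Prop) : is_ideal J -> exists m, is_maximal m /\ Defs.subset J m.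
Proof.
move=> HJ.
pose P := fun b : S -> Prop => b = (fun _ => False) \/
  (Defs.subset J b /\ ~ b 1 /\ (forall x y, b x -> b y -> b (x + y)) /\
   (forall r x, b x -> b (r * x))).
have [A [PA Amax]] : exists A, P A /\ forall B, classical_sets.proper A B -> ~ P B.
  apply: classical_sets.Zorn_bigcup => F FP Ftot.
  case: (classic (exists X, F X /\ X <> (fun _ => False))) => [[X [FX nX]]|H].
    have PX := FP X FX; case: PX => [//|[JX _]]; right.
    have FP2 Y (FY : F Y) (y : S) (Yy : Y y) : Defs.subset J Y /\ ~ Y 1 /\
        (forall x y, Y x -> Y y -> Y (x + y)) /\ (forall r x, Y x -> Y (r * x)).
      case: (FP Y FY) => [EY|//]; by rewrite EY in Yy.
    split; first by move=> z Jz; exists X => //; exact: JX.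
    split; first by move=> [Y FY Y1]; have [_ [] ] := FP2 Y FY 1 Y1.
    split.
      move=> x y [X1 F1 x1] [X2 F2 y2].
      case: (Ftot X1 X2 F1 F2) => sub.
        exists X2 => //; have [_ [_ [Ha _]]] := FP2 X2 F2 y y2.
        by apply: Ha => //; exact: sub.
      exists X1 => //; have [_ [_ [Ha _]]] := FP2 X1 F1 x x1.
      by apply: Ha => //; exact: sub.
    move=> r x [X1 F1 x1]; exists X1 => //.
    by have [_ [_ [_ Hm]]] := FP2 X1 F1 x x1; exact: Hm.
  left; apply: functional_extensionality => z; apply: propositional_extensionality.
  split=> // -[X FX Xz]; apply: H; exists X; split=> // EX; by rewrite EX in Xz.
have PJ : P J.
  right; case: (HJ) => _ [_ [Ha Hm]]; split; first by move=> z. split; first exact: ideal_1. by split.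
case: PA => [EA|[JA [A1 [Aa Am]]]].
  exfalso; apply: (Amax J) => //; rewrite EA; split; first by [].
  by case: HJ => [[x Jx] _] H; exact: (H x Jx).
have Ai : is_ideal A.
  split; first by case: HJ => [[x Jx] _]; exists x; exact: JA.
  by split=> //; exists 1.
exists A; split=> //; split=> // b bi Ab.
have Pb : P b.
  right; split; first by move=> z Jz; apply: Ab; exact: JA.
  by case: (bi) => _ [_ [Ha Hm]]; split=> //; exact: ideal_1.
have bA : forall x, b x -> A x.
  move=> x bx; apply: NNPP => nA; apply: (Amax b) => //; split => // H.
  by apply: nA; exact: H.
by move=> x; split; [exact: bA | exact: Ab].
Qed.

Lemma qc_gen (sigma : (S -> Prop) -> Prop) :
  (forall m, is_maximal m -> sigma m) -> (forall x, sigma x -> is_ideal x) ->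
  quasi_compact sigma.
Proof.
move=> Hmax Hid I U Uopen Ucov.
pose E e := exists i, forall x, sigma x -> ~ x e -> U i x.
pose J r := exists l : seq (S * S), r = \sum_(p <- l) p.1 * p.2 /\
   (forall p, List.In p l -> E p.2).
have cover : forall l : seq (S * S), (forall p, List.In p l -> E p.2) ->
   exists li : list I, forall x, sigma x -> (exists p, List.In p l /\ ~ x p.2) ->
     exists i, List.In i li /\ U i x.
  elim=> [|p l IH] HE.
    by exists nil => x _ [p [[]]].
  have [li Hli] : exists li : list I, forall x, sigma x ->
      (exists p, List.In p l /\ ~ x p.2) -> exists i, List.In i li /\ U i x.
    by apply: IH => q Hq; apply: HE; right.
  have [i Hi] := HE p (or_introl erefl).
  exists (i :: li) => x sx [q [[<-|Hq] nq]].
    by exists i; split; [left | exact: Hi].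
  have [j [Hj Uj]] := Hli x sx (ex_intro _ q (conj Hq nq)).
  by exists j; split; [right|].
case: (classic (J 1)) => [[l [e1 HE]]|nJ1].
  have [li Hli] := cover l HE.
  exists li => x sx; apply: Hli => //.
  apply: NNPP => H; apply: (ideal_1 (Hid x sx)); rewrite e1.
  apply: ideal_sum; first exact: Hid.
  by move=> p Hp; apply: NNPP => np; apply: H; exists p.
have Ji : is_ideal J.
  split; first by exists 0, nil; split=> //; rewrite big_nil.
  split; first by exists 1.
  split.
    move=> x y [l1 [-> H1]] [l2 [-> H2]]; exists (l1 ++ l2); split.
      by rewrite big_cat.
    move=> p Hp; case: (List.in_app_or _ _ _ Hp) => ?; [exact: H1 | exact: H2].
  move=> r x [l [-> H]]; exists (map (fun p => (r * p.1, p.2)) l); split.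
    by rewrite big_map mulr_sumr; apply: eq_bigr => p _; rewrite mulrA.
  move=> p Hp; case: (proj1 (List.in_map_iff _ _ _) Hp) => q [<- Hq]; exact: (H q Hq).
have [m [mm Jm]] := exists_max Ji.
have sm := Hmax m mm.
have [i Ui] := Ucov m sm.
have [_ Hop] := Uopen i.
have [L [LI [Lnu LU]]] := Hop m Ui.
have [e [ne He]] : exists e, ~ m e /\ forall a, List.In a L -> a e.
  apply: build_e => //; first exact: max_prime.
  by move=> a Ha sub; apply: (Lnu a Ha); split.
exfalso; apply: ne; apply: Jm; exists [:: (1, e)]; split.
  by rewrite big_cons big_nil mul1r addr0.
move=> p [<-|[]] /=; exists i => x sx nx; apply: LU => // a Ha [_ sub].
by apply: nx; apply: sub; exact: He.
Qed.

End Proof.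

Theorem corollary3p4 (S : comPzSemiRingType) :
  quasi_compact (@is_maximal S) /\
  quasi_compact (@is_prime S) /\
  quasi_compact (@is_strongly_irreducible S) /\
  quasi_compact (@is_primary S) /\
  quasi_compact (@is_irreducible S) /\
  quasi_compact (@is_radical S).
Proof.
have P1 : forall m : S -> Prop, is_maximal m -> is_prime m by exact: max_prime.
have P2 : forall p : S -> Prop, is_prime p -> is_strongly_irreducible p.
  move=> p [pi Hp]; split=> // a b ai bi sub.
  apply: NNPP => H.
  have [x [ax nx]] : exists x, a x /\ ~ p x.
    apply: NNPP => H1; apply: (H); left=> z az; apply: NNPP => nz; apply: H1; by exists z.
  have [y [bY ny]] : exists y, b y /\ ~ p y.
    apply: NNPP => H1; apply: (H); right=> w bw; apply: NNPP => nw; apply: H1; by exists w.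
  have : p (x * y).
    apply: sub; split.
      by rewrite mulrC; case: ai => _ [_ [_ Hm]]; exact: Hm.
    by case: bi => _ [_ [_ Hm]]; exact: Hm.
  by move=> /Hp [].
have P3 : forall p : S -> Prop, is_prime p -> is_primary p.
  move=> p [pi Hp]; split=> // x y /Hp [?|?]; [left | right; exists 1%N]; by rewrite ?expr1.
have P4 : forall p : S -> Prop, is_prime p -> is_irreducible p.
  move=> p Pp; have [pi Hs] := P2 p Pp; split=> // a b ai bi Heq.
  have sub : Defs.subset (inter a b) p by move=> z Hz; exact: (proj1 (Heq z) Hz).
  case: (Hs a b ai bi sub) => H; [left|right] => z; split;
    by [exact: H | move=> Hz; case: (proj2 (Heq z) Hz)].
have P5 : forall p : S -> Prop, is_prime p -> is_radical p.
  move=> p [pi Hp]; split=> // x; split; first by move=> px; exists 1%N; rewrite expr1.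
  move=> [n [n1 pn]]; elim: n n1 pn => [//|n IH] _.
  rewrite exprS => /Hp [//|]; case: n IH => [_|n IH]; first by rewrite expr0 => /(ideal_1 pi).
  exact: IH.
have Ii : forall (Q : (S -> Prop) -> Prop), (forall x, Q x -> is_ideal x) ->
    (forall m, is_maximal m -> Q m) -> quasi_compact Q.
  by move=> Q H1 H2; exact: qc_gen.
split; first by apply: Ii => [x []|].
split; first by apply: Ii => [x []|m /P1].
split; first by apply: Ii => [x []|m /P1 /P2].
split; first by apply: Ii => [x []|m /P1 /P3].
split; first by apply: Ii => [x []|m /P1 /P4].
by apply: Ii => [x []|m /P1 /P5].
Qed.
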